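(* Let $X$ be a locally convex topological space, and let $C_0(X)$ be the Banach space (with norm $\|f\|_{C_0(X)}=\max_{x\in X}|f(x)|$) of continuous $f:X\to\mathbb{R}$ such that $\{x\in X:|f(x)|>\varepsilon\}$ is compact for every $\varepsilon>0$. Let $\mathcal{M}(X)$ be the space of signed Borel measures on $X$ of bounded total variation, with total variation norm $\|\mu\|$. Let $K:X\times X\to\mathbb{R}$ satisfy $K(\cdot,x)\in C_0(X)$ for all $x\in X$ and $$\overline{\mathrm{span}}\{K(\cdot,x):x\in X\}=C_0(X)$$ (closure in $C_0(X)$). Define $$\mathcal{B}:=\Big\{f_\mu:=\int_X K(t,\cdot)\,d\mu(t):\ \mu\in\mathcal{M}(X)\Big\},\qquad \|f_\mu\|_{\mathcal{B}}:=\|\mu\|.$$ Then $\mathcal{B}$ is a pre-RKBS on $X$; that is, $\|\cdot\|_{\mathcal B}$ is well defined and $\mathcal{B}$ is a Banach space of functions on $X$ on which all point evaluation functionals are continuous, and for $f\in\mathcal{B}$, $\|f\|_{\mathcal B}=0$ if and only if $f$ vanishes everywhere on $X$.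
   Context: Standing assumptions of the paper for this setting: the dual of $C_0(X)$ is identified isometrically with $\mathcal{M}(X)$ via $T(f)=\int_X f\,d\mu$ with operator norm equal to $\|\mu\|$; and for all pairwise distinct $x_1,\dots,x_m\in X$ the matrix $K[{\bf x}]$ with entries $(K[{\bf x}])_{j,k}=K(x_k,x_j)$ is nonsingular. *)

(* Defs.v *)
From HB Require Import structures.
From mathcomp Require Import all_boot all_order all_algebra.
From mathcomp Require Import all_classical all_reals all_analysis.

Set Implicit Arguments.
Unset Strict Implicit.
Unset Printing Implicit Defensive.

Import Order.TTheory GRing.Theory Num.Theory.
Import numFieldNormedType.Exports.
Local Open Scope classical_set_scope.
Local Open Scope ring_scope.

(* A (locally convex) tvs is nonempty (it contains 0); we equip an alias of
   its carrier with the point 0 so that the Borel sigma-algebra can be built. *)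
Definition tvs_pt (R : realType) (X : tvsType R) : Type := X.
HB.instance Definition _ (R : realType) (X : tvsType R) :=
  Choice.on (tvs_pt X).
HB.instance Definition _ (R : realType) (X : tvsType R) :=
  isPointed.Build (tvs_pt X) (0 : X).

Definition borelT (R : realType) (X : tvsType R) :=
  g_sigma_algebraType (@open X : set (set (tvs_pt X))).

(* M(X): signed (finite, real-valued, hence bounded-variation) Borel measures. *)
Notation signed_measure X R := (charge (borelT X) R).

Section signed_measures.
Context (R : realType) (X : tvsType R).
Local Notation T := (borelT X).

Definition hahnP (nu : signed_measure X R) : set T :=
  projT1 (cid (Hahn_decomposition nu)).
Definition hahnN (nu : signed_measure X R) : set T :=
  projT1 (cid (projT2 (cid (Hahn_decomposition nu)))).
Lemma hahnPN (nu : signed_measure X R) :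
  hahn_decomposition nu (hahnP nu) (hahnN nu).
Proof. exact: (projT2 (cid (projT2 (cid (Hahn_decomposition nu))))). Qed.

Definition tvnorm (nu : signed_measure X R) : R :=
  fine (charge_variation (hahnPN nu) setT).

Definition cintegral (nu : signed_measure X R) (g : X -> R) : R :=
  fine ((\int[jordan_pos (hahnPN nu)]_(t in [set: T]) (g t)%:E)
        - (\int[jordan_neg (hahnPN nu)]_(t in [set: T]) (g t)%:E))%E.

Definition C0 (g : X -> R) : Prop :=
  continuous g /\ forall e : R, 0 < e -> compact [set x | e < `|g x|].

Definition supnorm (g : X -> R) : R := sup [set `|g x| | x in [set: X]].

Definition fmu (K : X -> X -> R) (nu : signed_measure X R) : X -> R :=
  fun x => cintegral nu (fun t => K t x).

Definition inB (K : X -> X -> R) (f : X -> R) : Prop :=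
  exists nu : signed_measure X R, f = fmu K nu.

(* ||f||_B := ||mu|| for a (chosen) mu with f = f_mu; 0 outside B *)
Definition normB (K : X -> X -> R) (f : X -> R) : R :=
  match pselect (inB K f) with
  | left h => tvnorm (projT1 (cid h))
  | right _ => 0
  end.

End signed_measures.

(* Main.v *)
Require Import Defs.
From HB Require Import structures.
From mathcomp Require Import all_boot all_order all_algebra.
From mathcomp Require Import all_classical all_reals all_analysis.
From mathcomp Require Import ring lra.
Import Order.TTheory GRing.Theory Num.Theory.
Import numFieldNormedType.Exports.
Local Open Scope classical_set_scope.
Local Open Scope ring_scope.

Section S.
Context (R : realType) (X : tvsType R).
Local Notation T := (borelT X).

Lemma cont_meas (g : X -> R) : continuous g -> measurable_fun (setT : set T) (g : T -> R).
Proof.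
move=> /continuousP cg; apply: (measurability _ (measurable_realfun.RGenOpens.measurableE R)).
move=> _ [_ [a [b ->] <-]]; rewrite setTI; apply: sub_sigma_algebra.
exact/cg/interval_open.
Qed.

Definition good (g : X -> R) := measurable_fun (setT : set T) (g : T -> R) /\
  exists M, forall t, `|g t| <= M.

Lemma C0_good g : C0 g -> good g.
Proof.
move=> [cg cpt]; split; first exact: cont_meas.
have := compact_bounded (continuous_compact (continuous_subspaceT cg) (cpt 1 ltr01)).
move=> [M [_ HM]].
exists (`|M| + 1) => t.
have [lt1|] := ltP 1 `|g t|.
  have := HM (`|M| + 1); rewrite /= => /(_ _ (g t)); apply.
    by rewrite (le_lt_trans (ler_norm M))// ltrDl.
  by exists t.
move=> /le_trans; by apply; rewrite lerDr.
Qed.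

Lemma good_int (mu : {finite_measure set T -> \bar R}) g : good g ->
  mu.-integrable setT (EFin \o (g : T -> R)).
Proof.
move=> [mg [M HM]]; apply: measurable_bounded_integrable => //.
  by rewrite -ge0_fin_numE// fin_num_measure.
exists M; split; first by rewrite num_real.
by move=> y My t _ /=; rewrite (le_trans (HM t))// ltW.
Qed.

Lemma good_lin a g h : good g -> good h -> good (fun t => a * g t + h t).
Proof.
move=> [mg [Mg Hg]] [mh [Mh Hh]]; split.
  apply: measurable_realfun.measurable_funD => //; apply: measurable_realfun.measurable_funM => //.
exists (`|a| * Mg + Mh) => t; rewrite (le_trans (ler_normD _ _))// lerD//.
by rewrite normrM ler_wpM2l.
Qed.

Lemma good_cst c : good (fun _ => c).
Proof. by split; [exact: measurable_cst | exists `|c|]. Qed.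

Lemma good_scale a g : good g -> good (fun t => a * g t).
Proof.
move=> gg; have := good_lin a _ _ gg (good_cst 0).
by congr good; apply: boolp.funext => t; rewrite addr0.
Qed.

Lemma good_norm g : good g -> good (fun t => `|g t|).
Proof.
move=> [mg [M HM]]; split; first exact: measurableT_comp.
by exists M => t; rewrite normr_id.
Qed.

Definition JP (mu : signed_measure X R) := jordan_pos (hahnPN mu).
Definition JN (mu : signed_measure X R) := jordan_neg (hahnPN mu).

Lemma cint_E mu g : good g -> cintegral mu g =
  Rintegral (JP mu) setT g - Rintegral (JN mu) setT g.
Proof.
move=> gg; rewrite /cintegral /Rintegral fineB //.
  exact: (integrable_fin_num measurableT (good_int _ _ gg)).
exact: (integrable_fin_num measurableT (good_int _ _ gg)).
Qed.

Lemma cint_lin mu a g h : good g -> good h ->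
  cintegral mu (fun t => a * g t + h t) = a * cintegral mu g + cintegral mu h.
Proof.
move=> gg gh; rewrite !cint_E //; last exact: good_lin.
rewrite !RintegralD //; try exact: good_int; try exact: good_int _ _ (good_scale _ _ gg).
rewrite !RintegralZl //; try exact: good_int.
by rewrite mulrBr; ring.
Qed.

Definition mass (mu : signed_measure X R) := fine (JP mu setT) + fine (JN mu setT).

Lemma Rint_bound (nu : {finite_measure set T -> \bar R}) g M : good g ->
  (forall t, `|g t| <= M) -> `|Rintegral nu setT g| <= M * fine (nu setT).
Proof.
move=> gg HM; rewrite (le_trans (le_normr_Rintegral _ _))//; first exact: good_int.
rewrite -Rintegral_cst//; apply: le_Rintegral => //.
- exact: good_int _ _ (good_norm _ gg).
- exact: good_int _ _ (good_cst _).
Qed.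

Lemma cint_bound mu g M : good g -> (forall t, `|g t| <= M) ->
  `|cintegral mu g| <= M * mass mu.
Proof.
move=> gg HM; rewrite cint_E // (le_trans (ler_normB _ _))// /mass mulrDr.
by rewrite lerD //; apply: Rint_bound.
Qed.

Lemma supnorm_ub (g : X -> R) M : (forall t, `|g t| <= M) -> forall t, `|g t| <= supnorm g.
Proof.
move=> HM t; apply: sup_upper_bound; last by exists t.
split; first by exists `|g t|, t.
by exists M => _ [x _ <-].
Qed.

Lemma supnorm_le (g : X -> R) e : (forall t, `|g t| <= e) -> supnorm g <= e.
Proof.
move=> He; apply: ge_sup; first by exists `|g 0|, 0.
by move=> _ [x _ <-].
Qed.

Lemma mass_ge0 mu : 0 <= mass mu.
Proof. by rewrite /mass addr_ge0 // fine_ge0 // measure_ge0. Qed.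

Lemma small0 (y : R) : (forall e, 0 < e -> `|y| <= e) -> y = 0.
Proof.
move=> H; apply/eqP; apply: contraT => y0.
have := H (`|y| / 2); rewrite divr_gt0 ?normr_gt0 // => /(_ isT).
move=> h; have hy : 0 < `|y| by rewrite normr_gt0.
lra.
Qed.

Lemma good_sum (I : Type) (r : seq I) (F : I -> X -> R) :
  (forall i, good (F i)) -> good (fun t => \sum_(i <- r) F i t).
Proof.
move=> HF; elim: r => [|i r IH].
  by under eq_fun do rewrite big_nil; exact: good_cst.
under eq_fun do rewrite big_cons -[F i _]mul1r.
exact: good_lin.
Qed.

Lemma D_zero (D : (X -> R) -> R) :
  (forall a g h, good g -> good h -> D (fun t => a * g t + h t) = a * D g + D h) ->
  D (fun _ => 0) = 0.
Proof.
move=> Dlin; have := Dlin 1 _ _ (good_cst 0) (good_cst 0).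
have -> : (fun t : X => (1 * 0 + 0 : R)) = (fun _ : X => (0 : R)).
  by apply: boolp.funext => t; rewrite mulr0 addr0.
rewrite mul1r => h.
have : D (fun _ => 0) + D (fun _ => 0) = D (fun _ => 0) + 0 by rewrite addr0 -h.
by move/addrI.
Qed.

Lemma D_sum (D : (X -> R) -> R) (I : Type) (r : seq I) (F : I -> X -> R) :
  (forall a g h, good g -> good h -> D (fun t => a * g t + h t) = a * D g + D h) ->
  (forall i, good (F i)) -> (forall i, D (F i) = 0) ->
  D (fun t => \sum_(i <- r) F i t) = 0.
Proof.
move=> Dlin HF HD0; elim: r => [|i r IH].
  under eq_fun do rewrite big_nil.
  exact: D_zero.
under eq_fun do rewrite big_cons -[F i _]mul1r.
by rewrite Dlin //; [rewrite HD0 IH mulr0 addr0 | exact: good_sum].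
Qed.

Variable K : X -> X -> R.
Hypothesis KC0 : forall x, C0 (fun t => K t x).
Hypothesis Kdense : forall g, C0 g -> forall e : R, 0 < e ->
      exists (n : nat) (c : 'I_n -> R) (xs : 'I_n -> X),
        supnorm (fun t => g t - \sum_(i < n) c i * K t (xs i)) <= e.

Lemma dense_zero (D : (X -> R) -> R) (C : R) : 0 <= C ->
  (forall a g h, good g -> good h -> D (fun t => a * g t + h t) = a * D g + D h) ->
  (forall g (M : R), good g -> (forall t, `|g t| <= M) -> `|D g| <= M * C) ->
  (forall x, D (fun t => K t x) = 0) -> forall g, C0 g -> D g = 0.
Proof.
move=> C0' Dlin Dbd DK g Cg; apply: small0 => e e0.
have e'0 : 0 < e / (C + 1) by rewrite divr_gt0 // ltr_wpDl.
have [n [c [xs Hs]]] := Kdense g Cg _ e'0.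
pose s := fun t => \sum_(i < n) c i * K t (xs i).
have gs : good s.
  by apply: good_sum => i; apply: good_scale; apply: C0_good.
have Ds : D s = 0.
  apply: D_sum => // i; first by apply: good_scale; apply: C0_good.
  have := Dlin (c i) _ _ (C0_good _ (KC0 (xs i))) (good_cst 0).
  rewrite DK mulr0 add0r.
  rewrite (D_zero _ Dlin).
  by under eq_fun do rewrite addr0.
have ggs : good (fun t => g t - s t).
  have := good_lin (-1) _ _ gs (C0_good _ Cg).
  by congr good; apply: boolp.funext => t; rewrite mulN1r addrC.
have -> : g = (fun t => 1 * (g t - s t) + s t).
  by apply: boolp.funext => t; rewrite mul1r subrK.
rewrite Dlin // Ds addr0 mul1r.
have [_ [M HM]] := ggs.
rewrite (le_trans (Dbd _ _ ggs (supnorm_ub _ _ HM)))//.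
rewrite (le_trans (ler_wpM2r C0' Hs))//.
rewrite mulrAC ler_pdivrMr ?ltr_wpDl // ler_wpM2l ?ltW //; lra.
Qed.

Lemma C0_zero : C0 (fun _ : X => (0 : R)).
Proof.
split; first by move=> x; exact: cvg_cst.
move=> e e0; have -> : [set x : X | e < `|(0 : R)|] = set0.
  by apply/seteqP; split => x //=; rewrite normr0 ltNge ltW.
exact: compact0.
Qed.

Lemma C0_scale (a : R) (g : X -> R) : 0 < a -> C0 g -> C0 (fun t => a * g t).
Proof.
move=> a0 [cg cpt]; split.
  by move=> x; apply: cvgMl_tmp; exact: cg.
move=> e e0; have -> : [set x | e < `|a * g x|] = [set x | e / a < `|g x|].
  apply/seteqP; split => x /=; rewrite normrM gtr0_norm // ltr_pdivrMr //;
  by rewrite mulrC.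
by apply: cpt; rewrite divr_gt0.
Qed.

Lemma supnorm_ge0 (g : X -> R) : good g -> 0 <= supnorm g.
Proof.
move=> [_ [M HM]]; exact: le_trans (normr_ge0 _) (supnorm_ub _ _ HM 0).
Qed.

Lemma fmu_rel (rho mu nu : signed_measure X R) (a : R) :
  (forall x, fmu K rho x = a * fmu K mu x + fmu K nu x) ->
  forall g, C0 g -> cintegral rho g = a * cintegral mu g + cintegral nu g.
Proof.
move=> H g Cg; apply/eqP; rewrite -subr_eq0; apply/eqP.
pose D := fun g => cintegral rho g - (a * cintegral mu g + cintegral nu g).
apply: (dense_zero D (mass rho + `|a| * mass mu + mass nu)) => //.
- apply: addr_ge0; [apply: addr_ge0; [exact: mass_ge0 | apply: mulr_ge0 => //; exact: mass_ge0] | exact: mass_ge0].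
- move=> b g1 h1 g1g h1g; rewrite /D !cint_lin //; ring.
- move=> g1 M g1g HM; rewrite /D.
  have h1 := cint_bound rho g1 M g1g HM.
  have h2 := cint_bound mu g1 M g1g HM.
  have h3 := cint_bound nu g1 M g1g HM.
  have h2' := ler_wpM2l (normr_ge0 a) h2.
  rewrite (le_trans (ler_normB _ _))// (le_trans (lerD (lexx _) (ler_normD _ _)))//.
  rewrite normrM.
  have -> : M * (mass rho + `|a| * mass mu + mass nu) = M * mass rho + `|a| * (M * mass mu) + M * mass nu by ring.
  lra.
- by move=> x; rewrite /D -/(fmu K rho x) -/(fmu K mu x) -/(fmu K nu x) H subrr.
Qed.

Lemma fmu_eq (mu nu : signed_measure X R) : fmu K mu = fmu K nu ->
  forall g, C0 g -> cintegral mu g = cintegral nu g.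
Proof.
move=> H g Cg; rewrite (@fmu_rel mu nu nu 0) ?mul0r ?add0r // => x.
by rewrite H mul0r add0r.
Qed.

Hypothesis Riesz_surj : forall T : (X -> R) -> R,
      (forall a g h, C0 g -> C0 h ->
         T (fun t => a * g t + h t) = a * T g + T h) ->
      (exists C : R, forall g, C0 g -> `|T g| <= C * supnorm g) ->
      exists mu : signed_measure X R, forall g, C0 g -> T g = cintegral mu g.
Hypothesis Riesz_isom : forall mu : signed_measure X R,
      sup [set `|cintegral mu g| | g in [set g | C0 g /\ supnorm g <= 1]]
      = tvnorm mu.

Lemma ball_ne (mu : signed_measure X R) :
  [set `|cintegral mu g| | g in [set g | C0 g /\ supnorm g <= 1]] !=set0.
Proof.
exists `|cintegral mu (fun _ => 0)|, (fun _ => 0); split => //.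
  exact: C0_zero.
by apply: (supnorm_le (fun _ => 0)) => t; rewrite normr0.
Qed.

Lemma tv_ub (mu : signed_measure X R) (g : X -> R) : C0 g -> supnorm g <= 1 -> `|cintegral mu g| <= tvnorm mu.
Proof.
move=> Cg sg; rewrite -Riesz_isom; apply: sup_upper_bound; last by exists g.
split; first exact: ball_ne.
exists (1 * mass mu) => _ [h [Ch sh] <-].
have [hg [M HM]] := C0_good _ Ch.
apply: cint_bound; first exact: C0_good.
by move=> t; exact: le_trans (supnorm_ub _ _ HM t) sh.
Qed.

Lemma tv_le (mu : signed_measure X R) (c : R) : (forall g, C0 g -> supnorm g <= 1 -> `|cintegral mu g| <= c) ->
  tvnorm mu <= c.
Proof.
move=> H; rewrite -Riesz_isom; apply: ge_sup; first exact: ball_ne.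
by move=> _ [h [Ch sh] <-]; exact: H.
Qed.

Lemma cint_lin_C0 (mu : signed_measure X R) (a : R) (g h : X -> R) : C0 g -> C0 h ->
  cintegral mu (fun t => a * g t + h t) = a * cintegral mu g + cintegral mu h.
Proof. by move=> Cg Ch; apply: cint_lin; apply: C0_good. Qed.

Lemma cint0 (mu : signed_measure X R) : cintegral mu (fun _ => 0) = 0.
Proof. by apply: D_zero => a g h gg hg; exact: cint_lin. Qed.

Lemma tv_ge0 (mu : signed_measure X R) : 0 <= tvnorm mu.
Proof.
apply: le_trans (normr_ge0 (cintegral mu (fun _ => 0))) (tv_ub _ _ C0_zero _).
by apply: supnorm_le => t; rewrite normr0.
Qed.

Lemma tv_bound (mu : signed_measure X R) (g : X -> R) : C0 g -> `|cintegral mu g| <= tvnorm mu * supnorm g.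
Proof.
move=> Cg; have gg := C0_good _ Cg; have [_ [M HM]] := gg.
have s0 := supnorm_ge0 _ gg.
have [sz|sp] := eqVneq (supnorm g) 0.
  suff -> : g = (fun _ => 0) by rewrite cint0 normr0; apply: mulr_ge0; [exact: tv_ge0 | exact: supnorm_ge0 _ (good_cst 0)].
  apply: boolp.funext => t; apply/eqP; rewrite -normr_eq0 eq_le normr_ge0 andbT.
  by rewrite -sz (supnorm_ub _ _ HM).
have sp' : 0 < supnorm g by rewrite lt_def sp s0.
have Cg' : C0 (fun t => (supnorm g)^-1 * g t) by apply: C0_scale => //; rewrite invr_gt0.
have := tv_ub mu _ Cg'.
have -> : cintegral mu (fun t => (supnorm g)^-1 * g t) = (supnorm g)^-1 * cintegral mu g.
  have := cint_lin_C0 mu (supnorm g)^-1 _ _ Cg C0_zero.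
  rewrite cint0 addr0 => <-; congr cintegral; apply: boolp.funext => t.
  by rewrite addr0.
rewrite normrM gtr0_norm ?invr_gt0 // => H.
have : (supnorm g)^-1 * `|cintegral mu g| <= tvnorm mu.
  apply: H; apply: supnorm_le => t; rewrite normrM gtr0_norm ?invr_gt0 //.
  by rewrite ler_pdivrMl // mulr1 (supnorm_ub _ _ HM).
by rewrite ler_pdivrMl // mulrC.
Qed.

Lemma lincomb (mu nu : signed_measure X R) (a : R) :
  exists rho : signed_measure X R,
    fmu K rho = (fun x => a * fmu K mu x + fmu K nu x) /\
    forall g, C0 g -> cintegral rho g = a * cintegral mu g + cintegral nu g.
Proof.
have [rho Hrho] : exists rho : signed_measure X R, forall g, C0 g ->
    (fun g => a * cintegral mu g + cintegral nu g) g = cintegral rho g.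
  apply: Riesz_surj.
    by move=> b g h Cg Ch; rewrite !cint_lin_C0 //; ring.
  exists (`|a| * tvnorm mu + tvnorm nu) => g Cg.
  rewrite (le_trans (ler_normD _ _))// normrM mulrDl -mulrA lerD //.
    by rewrite ler_wpM2l // tv_bound.
  exact: tv_bound.
exists rho; split; last by move=> g Cg; rewrite -Hrho.
by apply: boolp.funext => x; rewrite /fmu -Hrho.
Qed.

Lemma zero_meas : exists z : signed_measure X R,
  fmu K z = (fun _ => 0) /\ forall g, C0 g -> cintegral z g = 0.
Proof.
have [z Hz] : exists z : signed_measure X R, forall g, C0 g ->
    (fun _ : X -> R => (0 : R)) g = cintegral z g.
  apply: Riesz_surj; first by move=> b g h _ _; rewrite mulr0 addr0.
  by exists 0 => g _; rewrite normr0 mul0r.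
exists z; split; last by move=> g Cg; rewrite -Hz.
by apply: boolp.funext => x; rewrite /fmu -Hz.
Qed.

Lemma wd (mu nu : signed_measure X R) : fmu K mu = fmu K nu -> tvnorm mu = tvnorm nu.
Proof.
move=> H; apply/eqP; rewrite eq_le; apply/andP; split; apply: tv_le => g Cg sg.
  by rewrite (fmu_eq mu nu H g Cg); exact: tv_ub.
by rewrite -(fmu_eq mu nu H g Cg); exact: tv_ub.
Qed.

Lemma normB_E (f : X -> R) (mu : signed_measure X R) : f = fmu K mu ->
  normB K f = tvnorm mu.
Proof.
move=> fE; rewrite /normB; case: pselect => [h|]; last first.
  by move=> nh; exfalso; apply: nh; exists mu.
apply: wd; rewrite -fE; exact: (esym (projT2 (cid h))).
Qed.

Lemma normB_ge0 (f : X -> R) : 0 <= normB K f.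
Proof. by rewrite /normB; case: pselect => // h; exact: tv_ge0. Qed.

Lemma cauchy_R (a : nat -> R) : (forall e, 0 < e -> exists N, forall n m,
  (N <= n)%N -> (N <= m)%N -> `|a n - a m| <= e) -> cvg (a @ \oo).
Proof.
move=> H; apply/cauchy_cvgP/cauchy_exP => eps eps0.
have e2 : 0 < eps / 2 by rewrite divr_gt0.
have [N HN] := H _ e2.
exists (a N); exists N => // n Nn /=.
rewrite /ball /=; apply: le_lt_trans (HN N n (leqnn N) Nn) _.
lra.
Qed.

Lemma complete (u : nat -> X -> R) : (forall n, inB K (u n)) ->
  (forall e : R, 0 < e -> exists N : nat, forall n m : nat,
     (N <= n)%N -> (N <= m)%N -> normB K (fun x => u n x - u m x) <= e) ->
  exists f, inB K f /\
    (fun n => normB K (fun x => u n x - f x)) @ \oo --> (0 : R).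
Proof.
move=> Hu Hc.
have /choice [mu Hmu] : forall n, exists m : signed_measure X R, u n = fmu K m.
  by move=> n; have [m Hm] := Hu n; exists m.
have diff : forall n m g, C0 g ->
    `|cintegral (mu n) g - cintegral (mu m) g| <=
    normB K (fun x => u n x - u m x) * supnorm g.
  move=> n m g Cg; have [rho [Hf Hc']] := lincomb (mu m) (mu n) (-1).
  rewrite (normB_E _ rho); last first.
    by rewrite Hf; apply: boolp.funext => x; rewrite !Hmu mulN1r addrC.
  have -> : cintegral (mu n) g - cintegral (mu m) g = cintegral rho g.
    by rewrite Hc' // mulN1r addrC.
  exact: tv_bound.
have cvga : forall g, C0 g -> cvg ((fun n => cintegral (mu n) g) @ \oo).
  move=> g Cg; apply: cauchy_R => e e0.
  have s0 := supnorm_ge0 _ (C0_good _ Cg).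
  have s1 : 0 < supnorm g + 1 by lra.
  have [N HN] := Hc (e / (supnorm g + 1)) (divr_gt0 e0 s1).
  exists N => n m Nn Nm; apply: le_trans (diff n m g Cg) _.
  apply: le_trans (ler_wpM2r s0 (HN n m Nn Nm)) _.
  rewrite mulrAC ler_pdivrMr // ler_wpM2l ?ltW //; lra.
pose T g := lim ((fun n => cintegral (mu n) g) @ \oo).
have [rho Hrho] : exists rho : signed_measure X R, forall g, C0 g -> T g = cintegral rho g.
  apply: Riesz_surj.
    move=> b g h Cg Ch; rewrite /T; apply: cvg_lim => //.
    have -> : (fun n => cintegral (mu n) (fun t => b * g t + h t)) =
        (fun n => b * cintegral (mu n) g + cintegral (mu n) h).
      by apply: boolp.funext => n; rewrite cint_lin_C0.
    apply: cvgD; last exact: cvga.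
    by apply: cvgMl_tmp; exact: cvga.
  have [N HN] := Hc 1 ltr01.
  exists (tvnorm (mu N) + 1) => g Cg.
  have s0 := supnorm_ge0 _ (C0_good _ Cg).
  have cn : (fun n => `|cintegral (mu n) g|) @ \oo --> `|T g|.
    by apply: cvg_norm; exact: cvga.
  rewrite -(cvg_lim _ cn) //; apply: limr_le.
    by apply/cvg_ex; eexists; exact: cn.
  exists N => // n Nn /=.
  have h1 := tv_bound (mu N) g Cg.
  have h2 := diff n N g Cg.
  have h3 := ler_wpM2r s0 (HN n N Nn (leqnn N)).
  have h4 := ler_normD (cintegral (mu N) g) (cintegral (mu n) g - cintegral (mu N) g).
  rewrite addrC subrK in h4.
  rewrite mulrDl mul1r; lra.
exists (fmu K rho); split; first by exists rho.
apply/cvgrPdist_le => e e0; have [N HN] := Hc e e0.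
exists N => // n Nn /=.
rewrite sub0r normrN ger0_norm ?normB_ge0 //.
have [sig [Hf Hs]] := lincomb rho (mu n) (-1).
rewrite (normB_E _ sig); last first.
  by rewrite Hf; apply: boolp.funext => x; rewrite Hmu mulN1r addrC.
apply: tv_le => g Cg sg.
rewrite Hs // mulN1r addrC -Hrho //.
have s0 := supnorm_ge0 _ (C0_good _ Cg).
have cm : (fun m => `|cintegral (mu n) g - cintegral (mu m) g|) @ \oo -->
    `|cintegral (mu n) g - T g|.
  apply: cvg_norm; apply: cvgB; first exact: cvg_cst.
  exact: cvga.
rewrite -(cvg_lim _ cm) //; apply: limr_le.
  by apply/cvg_ex; eexists; exact: cm.
exists N => // m Nm /=.
apply: le_trans (diff n m g Cg) _.
have hn := HN n m Nn Nm.
have hb := normB_ge0 (fun x => u n x - u m x).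
apply: le_trans (ler_wpM2l hb sg) _; rewrite mulr1 //.
Qed.

Lemma main_conj :
  (forall mu nu : signed_measure X R, fmu K mu = fmu K nu -> tvnorm mu = tvnorm nu)
  /\ inB K (fun _ => 0)
  /\ (forall (a : R) f g, inB K f -> inB K g -> inB K (fun x => a * f x + g x))
  /\ (forall f g, inB K f -> inB K g ->
        normB K (fun x => f x + g x) <= normB K f + normB K g)
  /\ (forall (a : R) f, inB K f -> normB K (fun x => a * f x) = `|a| * normB K f)
  /\ (forall f, inB K f -> 0 <= normB K f)
  /\ (forall u : nat -> X -> R, (forall n, inB K (u n)) ->
        (forall e : R, 0 < e -> exists N : nat, forall n m : nat,
           (N <= n)%N -> (N <= m)%N -> normB K (fun x => u n x - u m x) <= e) ->
        exists f, inB K f /\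
          (fun n => normB K (fun x => u n x - f x)) @ \oo --> (0 : R))
  /\ (forall x : X, exists C : R, forall f, inB K f -> `|f x| <= C * normB K f)
  /\ (forall f, inB K f -> (normB K f = 0 <-> forall x, f x = 0)).
Proof.
have [z [Hz Hzc]] := zero_meas.
have tvz : tvnorm z = 0.
  apply/eqP; rewrite eq_le tv_ge0 andbT; apply: tv_le => g Cg _.
  by rewrite Hzc // normr0.
have peval : forall x : X, exists C : R, forall f, inB K f -> `|f x| <= C * normB K f.
  move=> x; exists (supnorm (fun t => K t x)) => f [mu ->].
  rewrite (normB_E _ mu) // mulrC; exact: tv_bound.
split; first exact: wd.
split; first by exists z.
split.
  move=> a f g [mu ->] [nu ->]; have [rho [Hf _]] := lincomb mu nu a.
  by exists rho.
split.
  move=> f g [mu ->] [nu ->]; have [rho [Hf Hc]] := lincomb mu nu 1.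
  rewrite (normB_E _ rho); last by rewrite Hf; apply: boolp.funext => x; rewrite mul1r.
  rewrite (normB_E _ mu) // (normB_E _ nu) //.
  apply: tv_le => h Ch sh; rewrite Hc // mul1r.
  apply: le_trans (ler_normD _ _) _; apply: lerD; exact: tv_ub.
split.
  move=> a f [mu ->]; have [rho [Hf Hc]] := lincomb mu z a.
  rewrite (normB_E _ rho); last first.
    by rewrite Hf Hz; apply: boolp.funext => x; rewrite addr0.
  rewrite (normB_E _ mu) //.
  apply/eqP; rewrite eq_le; apply/andP; split.
    apply: tv_le => g Cg sg; rewrite Hc // Hzc // addr0 normrM.
    by apply: ler_wpM2l => //; exact: tv_ub.
  have [->|a0] := eqVneq a 0; first by rewrite normr0 mul0r tv_ge0.
  have a0' : 0 < `|a| by rewrite normr_gt0.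
  rewrite mulrC -ler_pdivlMr //; apply: tv_le => g Cg sg.
  rewrite ler_pdivlMr // -normrM mulrC -(addr0 (a * _)) -(Hzc g Cg) -Hc //.
  exact: tv_ub.
split; first by move=> f _; exact: normB_ge0.
split; first exact: complete.
split; first exact: peval.
move=> f [mu fE]; split.
  move=> n0 x; have [C HC] := peval x.
  have := HC f (ex_intro _ mu fE); rewrite n0 mulr0 normr_le0.
  by move/eqP.
move=> f0; rewrite (normB_E _ mu) // -tvz; apply: wd.
by rewrite Hz -fE; apply: boolp.funext => x; rewrite f0.
Qed.
End S.

Theorem proposition2p1 (R : realType) (X : tvsType R) (K : X -> X -> R)
  (* standing assumption: C_0(X)^* = M(X) isometrically via T(f) = int f dmu *)
  (Riesz_inj : forall mu nu : signed_measure X R,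
      (forall g, C0 g -> cintegral mu g = cintegral nu g) ->
      forall A : set (borelT X), measurable A -> mu A = nu A)
  (Riesz_surj : forall T : (X -> R) -> R,
      (forall a g h, C0 g -> C0 h ->
         T (fun t => a * g t + h t) = a * T g + T h) ->
      (exists C : R, forall g, C0 g -> `|T g| <= C * supnorm g) ->
      exists mu : signed_measure X R, forall g, C0 g -> T g = cintegral mu g)
  (Riesz_isom : forall mu : signed_measure X R,
      sup [set `|cintegral mu g| | g in [set g | C0 g /\ supnorm g <= 1]]
      = tvnorm mu)
  (* standing assumption: kernel matrices at distinct points are nonsingular *)
  (Knonsing : forall (m : nat) (xs : 'I_m -> X), injective xs ->
      (\matrix_(j < m, k < m) K (xs k) (xs j)) \in unitmx)
  (* K(., x) in C_0(X) *)
  (KC0 : forall x, C0 (fun t => K t x))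
  (* closure of span{K(., x)} = C_0(X) *)
  (Kdense : forall g, C0 g -> forall e : R, 0 < e ->
      exists (n : nat) (c : 'I_n -> R) (xs : 'I_n -> X),
        supnorm (fun t => g t - \sum_(i < n) c i * K t (xs i)) <= e) :
  (* ||.||_B is well defined *)
  (forall mu nu : signed_measure X R, fmu K mu = fmu K nu -> tvnorm mu = tvnorm nu)
  (* B is a vector space of functions on X *)
  /\ inB K (fun _ => 0)
  /\ (forall (a : R) f g, inB K f -> inB K g -> inB K (fun x => a * f x + g x))
  (* ||.||_B is a norm *)
  /\ (forall f g, inB K f -> inB K g ->
        normB K (fun x => f x + g x) <= normB K f + normB K g)
  /\ (forall (a : R) f, inB K f -> normB K (fun x => a * f x) = `|a| * normB K f)
  /\ (forall f, inB K f -> 0 <= normB K f)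
  (* B is complete *)
  /\ (forall u : nat -> X -> R, (forall n, inB K (u n)) ->
        (forall e : R, 0 < e -> exists N : nat, forall n m : nat,
           (N <= n)%N -> (N <= m)%N -> normB K (fun x => u n x - u m x) <= e) ->
        exists f, inB K f /\
          (fun n => normB K (fun x => u n x - f x)) @ \oo --> (0 : R))
  (* point evaluations are continuous *)
  /\ (forall x : X, exists C : R, forall f, inB K f -> `|f x| <= C * normB K f)
  (* ||f||_B = 0 iff f = 0 *)
  /\ (forall f, inB K f -> (normB K f = 0 <-> forall x, f x = 0)).
Proof.
have H := @main_conj R X K KC0 Kdense Riesz_surj Riesz_isom.
exact H.
Qed.
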